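(* Let $(S,\cdot)$ be a discrete semigroup, let $\mathcal{F}$ be a filter on $S$ such that $\overline{\mathcal{F}}$ is a subsemigroup of $\beta S$, and let $(X,\langle T_s\rangle_{s\in S})$ be a dynamical system. Then $x,y\in X$ are $\mathcal{F}$-proximal if and only if there is some $p\in\overline{\mathcal{F}}$ such that $T_p(x)=T_p(y)$.
   Context: $\beta S$ is the Stone–Čech compactification of $S$ (ultrafilters on $S$) with the extended operation making it a compact right topological semigroup ($A\in pq$ iff $\{x\in S:x^{-1}A\in q\}\in p$). $\overline{\mathcal{F}}=\bigcap_{F\in\mathcal{F}}\overline{F}$ is the set of ultrafilters containing $\mathcal{F}$. A dynamical system $(X,\langle T_s\rangle_{s\in S})$: $X$ compact Hausdorff, each $T_s:X\to X$ continuous, $T_s\circ T_t=T_{st}$. For $p\in\beta S$, $T_p:X\to X$ is defined by $T_p(x)=p\text{-}\lim_{s\in S}T_s(x)$ (equivalently $T_p=\tilde\theta(p)$, where $\tilde\theta$ is the continuous extension to $\beta S$ of $s\mapsto T_s\in X^X$); one has $T_p\circ T_q=T_{pq}$. Points $x,y\in X$ are $\mathcal{F}$-proximal if for every neighbourhood $U$ of the diagonal in $X\times X$ and every $F\in\mathcal{F}$ there is $s\in F$ with $(T_s(x),T_s(y))\in U$. *)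

(* Defs.v *)
From HB Require Import structures.
From mathcomp Require Import all_boot.
From mathcomp Require Import boolp classical_sets filter topology.
Set Implicit Arguments. Unset Strict Implicit. Unset Printing Implicit Defensive.
Local Open Scope classical_set_scope.

Definition linv {S : Type} (op : S -> S -> S) (x : S) (A : set S) : set S :=
  [set y | A (op x y)].

Definition ultra_mul {S : Type} (op : S -> S -> S) (p q : set_system S)
  : set_system S := [set A | p [set x | q (linv op x A)]].

Definition Fbar {S : Type} (F : set_system S) : set (set_system S) :=
  [set p | UltraFilter p /\ F `<=` p].

Definition Fbar_subsemigroup {S : Type} (op : S -> S -> S) (F : set_system S) :=
  Fbar F !=set0 /\
  forall p q, Fbar F p -> Fbar F q -> Fbar F (ultra_mul op p q).

Definition dynamical_system {S : Type} (op : S -> S -> S) (X : topologicalType)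
  (T : S -> X -> X) :=
  [/\ compact [set: X], hausdorff_space X,
      (forall s, continuous (T s)) &
      (forall s t, T s \o T t = T (op s t))].

(* T_p(x) = p-lim_{s} T_s(x): the (chosen) limit of the image filter
   (fun s => T s x) @ p; it exists and is unique when X is compact Hausdorff
   and p is an ultrafilter.  (x is only a dummy default for the choice.) *)
Definition Tp {S : Type} {X : topologicalType} (T : S -> X -> X)
  (p : set_system S) (x : X) : X :=
  xget x [set l : X | (fun s => T s x) @ p --> l].

Definition diag_nbhs {X : topologicalType} (U : set (X * X)) :=
  exists V : set (X * X), [/\ open V, (forall x : X, V (x, x)) & V `<=` U].

Definition F_proximal {S : Type} {X : topologicalType} (T : S -> X -> X)
  (F : set_system S) (x y : X) :=
  forall U : set (X * X), diag_nbhs U ->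
  forall A, F A -> exists2 s, A s & U (T s x, T s y).

(* Main.v *)
Require Import Defs.
From mathcomp Require Import all_boot.
From mathcomp Require Import boolp classical_sets filter topology.
Local Open Scope classical_set_scope.

Lemma ultra_lim_ex (S : Type) (X : topologicalType) (f : S -> X)
  (p : set_system S) : compact [set: X] -> UltraFilter p ->
  exists l : X, f @ p --> l.
Proof.
move=> cX up.
have [l [_ cl]] := cX (f @ p) _ (filterT : (f @ p) setT).
exists l => N Nl.
have [//|pc] := in_ultra_setVsetC (f @^-1` N) up.
have [z [nz zN]] := cl (~` N) N pc Nl.
by exfalso; apply: nz.
Qed.

Lemma Tp_cvg (S : Type) (X : topologicalType) (T : S -> X -> X)
  (p : set_system S) (x : X) : compact [set: X] -> UltraFilter p ->
  (fun s => T s x) @ p --> Tp T p x.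
Proof.
move=> cX up; rewrite /Tp.
by apply: (@xgetPex _ x [set l : X | (fun s => T s x) @ p --> l]); apply: ultra_lim_ex.
Qed.

Theorem lemma10 (S : Type) (op : S -> S -> S)
  (op_assoc : forall a b c, op a (op b c) = op (op a b) c)
  (F : set_system S) (F_filter : ProperFilter F)
  (hF : Fbar_subsemigroup op F)
  (X : topologicalType) (T : S -> X -> X) (hT : dynamical_system op T)
  (x y : X) :
  F_proximal T F x y <-> exists2 p, Fbar F p & Tp T p x = Tp T p y.
Proof.
case: hT => cX hX _ _.
split; last first.
  move=> [p [up Fp] eq] U [V [oV dV VU]] A FA.
  set z := Tp T p x.
  have cx := @Tp_cvg _ _ T p x cX up; have cy := @Tp_cvg _ _ T p y cX up.
  rewrite -/z in cx; rewrite -eq -/z in cy.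
  have : nbhs (z, z) V by move: oV; rewrite openE => /(_ _ (dV z)).
  move=> [[P Q] /= [Pz Qz] PQV].
  have h1 := cx _ Pz; have h2 := cy _ Qz.
  have pA : p A := Fp _ FA.
  have [s [[As Ps] Qs]] : (A `&` [set s | P (T s x)] `&` [set s | Q (T s y)]) !=set0.
    by apply: (@filter_ex _ p _); apply: filterI => //; apply: filterI.
  by exists s => //; apply: VU; apply: PQV.
move=> prox.
pose D := [set i : set (X * X) * set S | diag_nbhs i.1 /\ F i.2].
pose B := fun i : set (X * X) * set S => [set s | i.2 s /\ i.1 (T s x, T s y)].
have dT : diag_nbhs [set: X * X] by exists setT; split => //; exact: openT.
have PF : ProperFilter (filter_from D B).
  apply: filter_from_proper.
    apply: filter_from_filter; first by exists (setT, setT); split => //; exact: filterT.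
    move=> [U1 A1] [U2 A2] [[V1 [o1 d1 s1]] F1] [[V2 [o2 d2 s2]] F2].
    exists (U1 `&` U2, A1 `&` A2).
      split; last exact: filterI.
      exists (V1 `&` V2); split; first exact: openI.
        by move=> w; split.
      by move=> w [/s1 ? /s2 ?]; split.
    by move=> s [[? ?] [? ?]]; split; split.
  move=> [U A] [dU FA] /=.
  by have [s As Us] := prox U dU A FA; exists s.
have [p [up sp]] := ultraFilterLemma PF.
exists p.
  split => // A FA; apply: sp; exists (setT, A) => //.
  by move=> s [].
have cx := @Tp_cvg _ _ T p x cX up; have cy := @Tp_cvg _ _ T p y cX up.
set a := Tp T p x in cx *; set b := Tp T p y in cy *.
apply: (hX) => A Bb Aa Bbb.
have regA : {for a, regular_space X} by apply: (@compact_regular X a setT hX cX); exact: filterT.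
have regB : {for b, regular_space X} by apply: (@compact_regular X b setT hX cX); exact: filterT.
have [A' A'a cA'] := regA _ Aa.
have [B' B'b cB'] := regB _ Bbb.
apply: contrapT => hne.
pose V := [set w : X * X | ~ closure A' w.1 \/ ~ closure B' w.2].
have dV : diag_nbhs V.
  exists V; split => //.
    rewrite (_ : V = (fst @^-1` (~` closure A')) `|` (snd @^-1` (~` closure B'))) //.
    apply: openU.
      rewrite openE => w /= nw.
      have : nbhs w.1 (~` closure A') by apply: open_nbhs_nbhs; split => //; rewrite openC; exact: closed_closure.
      by move=> h; exists (~` closure A', setT) => //; [split => //; exact: filterT | move=> [? ?] []].
    rewrite openE => w /= nw.
    have : nbhs w.2 (~` closure B') by apply: open_nbhs_nbhs; split => //; rewrite openC; exact: closed_closure.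
    by move=> h; exists (setT, ~` closure B') => //; [split => //; exact: filterT | move=> [? ?] []].
  move=> w; rewrite /V /=.
  apply: contrapT => /not_orP [/contrapT h1 /contrapT h2].
  by apply: hne; exists w; split; [exact: cA' | exact: cB'].
have pV : p (B (V, setT)) by apply: sp; exists (V, setT) => //; split => //; exact: filterT.
have h1 := cx _ A'a; have h2 := cy _ B'b.
have [s [[[_ Vs] As] Bs]] : (B (V, setT) `&` [set s | A' (T s x)] `&` [set s | B' (T s y)]) !=set0.
  by apply: (@filter_ex _ p _); apply: filterI => //; apply: filterI.
by case: Vs => /=; apply; apply: subset_closure.
Qed.
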